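(* Consider an instance of the robust flow design problem on a directed graph $D=(V,A)$ with source $s$, sink $t$, capacities $u\in\mathbb{R}_+^A$, protection cost coefficients $\gamma\in\mathbb{R}_+^A$, flow player budget $B_F>0$ and interdictor budget $B_I\ge0$. There exists an optimal solution $(x^*,c^* )$ such that for all $e\in A^*$, $$c^*_e=\begin{cases}\dfrac{B_F}{\Gamma(x^* )}&\text{if there exists }P\in\mathcal{P}\text{ with }e\in P\text{ and }x^*_P>0,\\[1ex] 0&\text{otherwise,}\end{cases}$$ where $\Gamma(x):=\sum_{P\in\mathcal{P}}\sum_{e\in P}\gamma_e x_P$.
   Context: $\mathcal{P}$ is the set of $s$-$t$-paths in $D$ and $X=\{x\in\mathbb{R}_+^{\mathcal{P}}:\sum_{P\ni e}x_P\le u_e\ \forall e\in A\}$. $A^*=\{e\in A:\gamma_e>0\}$. In the design problem the flow player chooses $x\in X$ and interdiction costs $c\in\mathbb{R}_+^A$ subject to $\sum_{e\in A}\gamma_e c_e\sum_{P\in\mathcal{P}:e\in P}x_P\le B_F$; for arcs with $\gamma_e=0$ one has $c_e=\infty$ (flow cannot be stolen there). The interdictor then chooses $z\in\mathbb{R}_+^{A\times\mathcal{P}}$ with $\sum_{e\in A}c_e\sum_{P\ni e}z_{e,P}\le B_I$ (and $z_{e,P}=0$ if $c_e=\infty$), and the value is $\mathrm{val}(x,z)=\sum_{P\in\mathcal{P}}(x_P-\sum_{e\in P}z_{e,P})^+$. An optimal solution is a feasible pair $(x,c)$ maximizing $\min_z\mathrm{val}(x,z)$. *)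

(* Defs.v *)
From HB Require Import structures.
From mathcomp Require Import all_boot all_order all_algebra.
From mathcomp Require Import reals.
Set Implicit Arguments. Unset Strict Implicit. Unset Printing Implicit Defensive.
Import Order.TTheory GRing.Theory Num.Theory.
Local Open Scope ring_scope.

(* Directed multigraph D = (V, A): arc a goes from tl a to hd a. *)
Section Paths.
Variables (V A : finType) (tl hd : A -> V) (s t : V).

Definition stpath (p : seq A) : bool :=
  match p with
  | [::] => false
  | a :: p' => [&& tl a == s, path (fun a b => hd a == tl b) a p',
                  hd (last a p') == t & uniq (s :: map hd p)]
  end.

(* Arc sets of simple s-t paths (a simple path is determined by its arc set). *)
Definition is_stpath_set (S : {set A}) : bool :=
  [exists tup : (#|S|).-tuple A, stpath tup && (S == [set a in tup])].

Definition stpath_t : finType := {S : {set A} | is_stpath_set S}.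
End Paths.

Section Design.
Variables (R : realType) (V A : finType) (tl hd : A -> V) (s t : V).
Local Notation P_t := (stpath_t tl hd s t).
Variables (u gamma : A -> R) (BF BI : R).

Definition arc_flow (x : P_t -> R) (e : A) : R :=
  \sum_(P : P_t | e \in val P) x P.

Definition Gamma (x : P_t -> R) : R :=
  \sum_(P : P_t) \sum_(e in val P) gamma e * x P.

Definition flow_feasible (x : P_t -> R) : Prop :=
  (forall P, 0 <= x P) /\ (forall e, arc_flow x e <= u e).

(* For arcs with gamma_e = 0
   the cost is c_e = infinity; the value c e stored there is a dummy that
   plays no role (it is multiplied by gamma_e = 0 here, and the interdictor
   is forbidden to use such arcs). *)
Definition design_feasible (x : P_t -> R) (c : A -> R) : Prop :=
  flow_feasible x /\ (forall e, 0 < gamma e -> 0 <= c e) /\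
  \sum_(e : A) gamma e * c e * arc_flow x e <= BF.

Definition interdiction_feasible (c : A -> R) (z : A -> P_t -> R) : Prop :=
  (forall e P, 0 <= z e P) /\
  (forall e P, gamma e = 0 -> z e P = 0) /\
  \sum_(e : A) c e * (\sum_(P : P_t | e \in val P) z e P) <= BI.

Definition val_xz (x : P_t -> R) (z : A -> P_t -> R) : R :=
  \sum_(P : P_t) Num.max 0 (x P - \sum_(e in val P) z e P).

(* (x,c) is optimal: feasible, and its worst-case value inf_z val(x,z) is at
   least that of every feasible (x',c'); expressed via lower bounds so that no
   attainment of the infimum is presupposed. *)
Definition design_optimal (x : P_t -> R) (c : A -> R) : Prop :=
  design_feasible x c /\
  forall (x' : P_t -> R) (c' : A -> R), design_feasible x' c' ->
  forall r : R,
    (forall z', interdiction_feasible c' z' -> r <= val_xz x' z') ->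
    (forall z, interdiction_feasible c z -> r <= val_xz x z).
End Design.

(* Main.v *)
Require Import Defs.
From HB Require Import structures.
From mathcomp Require Import all_boot all_order all_algebra.
From mathcomp Require Import reals.
From mathcomp Require Import boolp classical_sets topology normedtype derive.
From mathcomp Require Import ring lra.
Import Order.TTheory GRing.Theory Num.Theory.
Import numFieldNormedType.Exports.
Local Open Scope ring_scope.
Local Open Scope classical_set_scope.

Lemma cont_sum (R : realType) (U : topologicalType) (J : Type) (f : J -> U -> R) (r : seq J) :
  (forall j, continuous (f j)) -> continuous (fun v => \sum_(j <- r) f j v).
Proof.
move=> cf; elim: r => [|j r IH].
  under eq_fun do rewrite big_nil; exact: cst_continuous.
under eq_fun do rewrite big_cons.
move=> v; exact: (continuousD (cf j v) (IH v)).
Qed.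

Lemma closed_les (R : realType) (U : topologicalType) (J : Type) (f : J -> U -> R) (g : J -> R) :
  (forall j, continuous (f j)) -> closed [set v | forall j, f j v <= g j].
Proof.
move=> cf.
have -> : [set v | forall j, f j v <= g j] = \bigcap_(j in setT) (f j @^-1` [set x | x <= g j]).
  by apply/seteqP; split=> [v H j _|v H j]; [exact: H|exact: (H j I)].
apply: closed_bigI => j _; apply: preimage_closed; last exact: closed_le.
by move=> v _; exact: cf.
Qed.

Lemma lp_attain (R : realType) (T I : finType) (a : I -> T -> R) (b : I -> R)
    (w : T -> R) (M : R) :
  0 <= M -> (forall i, 0 <= b i) ->
  (forall x : T -> R, (forall P, 0 <= x P) ->
     (forall i, \sum_P a i P * x P <= b i) -> forall P, x P <= M) ->
  exists x : T -> R, ((forall P, 0 <= x P) /\ (forall i, \sum_P a i P * x P <= b i)) /\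
    forall y : T -> R, (forall P, 0 <= y P) -> (forall i, \sum_P a i P * y P <= b i) ->
      \sum_P w P * y P <= \sum_P w P * x P.
Proof.
move=> M0 b0 bnd.
pose n := #|T|.
pose tov (v : 'rV[R]_n) : T -> R := fun P => v ord0 (enum_rank P).
pose ofv (y : T -> R) : 'rV[R]_n := \row_j y (enum_val j).
pose L (c : T -> R) (v : 'rV[R]_n) := \sum_(j < n) c (enum_val j) * v ord0 j.
have LE c v : \sum_P c P * tov v P = L c v.
  rewrite /L (reindex (@enum_rank T)) /=; last first.
    by exists enum_val => [P _|j _]; [exact: enum_rankK|exact: enum_valK].
  by apply: eq_bigr => P _; rewrite enum_rankK.
have tovK y : tov (ofv y) = y.
  by apply/funext => P; rewrite /tov /ofv mxE enum_rankK.
have Lc c : continuous (L c).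
  apply: cont_sum => j v; apply: continuousM; first exact: cst_continuous.
  exact: coord_continuous.
pose K := [set v : 'rV[R]_n | (forall j, - v ord0 j <= 0)] `&`
          [set v | forall j, v ord0 j <= M] `&` [set v | forall i, L (a i) v <= b i].
have Kc : compact K.
  apply: (@subclosed_compact _ _
      [set v : 'rV[R]_n | forall j, `[0, M]%classic (v ord0 j)]).
  - apply: closedI; first apply: closedI.
    + apply: closed_les => j v; apply: continuousN; exact: coord_continuous.
    + apply: closed_les => j; exact: coord_continuous.
    + by apply: closed_les => i; exact: Lc.
  - by apply: (@rV_compact _ n (fun=> `[0, M]%classic)) => _; exact: segment_compact.
  - move=> v [[H1 H2] _] j /=; rewrite in_itv /= H2 andbT.
    by rewrite -oppr_le0 H1.
have K0 : K !=set0.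
  exists 0; split; first split.
  - by move=> j; rewrite mxE oppr0.
  - by move=> j; rewrite mxE.
  - by move=> i; rewrite /L big1 // => j _; rewrite mxE mulr0.
have [v vK vmax] := compact_EVT_max K0 Kc (continuous_subspaceT (Lc w)).
move: vK; rewrite inE => -[[H1 H2] H3].
have tov0 P : 0 <= tov v P by rewrite -oppr_le0 H1.
have tovA i : \sum_P a i P * tov v P <= b i by rewrite LE H3.
exists (tov v); split; first by split.
move=> y y0 yA; rewrite !LE.
rewrite -{1}(tovK y) LE; apply: vmax; rewrite inE; split; first split.
- by move=> j; rewrite mxE oppr_le0.
- by move=> j; rewrite mxE; apply: bnd.
- by move=> i; rewrite -LE tovK.
Qed.

Lemma path_nonempty (V A : finType) (tl hd : A -> V) (s t : V) (P : stpath_t tl hd s t) :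
  exists e, e \in val P.
Proof.
case: P => S /= /existsP [tup /andP [hp /eqP ->]].
case: tup hp => [[|a l] ?] //= _; exists a.
by rewrite inE /= in_cons eqxx.
Qed.

Local Close Scope classical_set_scope.

Lemma max0M (R : realType) (a y : R) : 0 <= y -> Num.max 0 (a * y) = Num.max 0 a * y.
Proof. by move=> y0; rewrite maxr_pMl // mul0r. Qed.

Theorem lemma3 (R : realType) (V A : finType) (tl hd : A -> V) (s t : V)
    (u gamma : A -> R) (BF BI : R)
    (hu : forall e, 0 <= u e) (hgamma : forall e, 0 <= gamma e)
    (hBF : 0 < BF) (hBI : 0 <= BI) :
  exists (x : stpath_t tl hd s t -> R) (c : A -> R),
    design_optimal u gamma BF BI x c /\
    forall e : A, 0 < gamma e ->
      ((exists P : stpath_t tl hd s t, e \in val P /\ 0 < x P) ->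
         c e = BF / Gamma gamma x) /\
      (~ (exists P : stpath_t tl hd s t, e \in val P /\ 0 < x P) ->
         c e = 0).
Proof.
set PT := stpath_t tl hd s t.
pose lam := BI / BF.
have lam0 : 0 <= lam by rewrite divr_ge0 // ltW.
have BF0 : BF != 0 by rewrite gt_eqF.
pose g (P : PT) := \sum_(e in val P) gamma e.
have g0 P : 0 <= g P by rewrite sumr_ge0.
pose wt (P : PT) := Num.max 0 (1 - lam * g P).
pose a (e : A) (P : PT) : R := if e \in val P then 1 else 0.
have AF y e : arc_flow y e = \sum_P a e P * y P.
  rewrite /arc_flow big_mkcond; apply: eq_bigr => P _; rewrite /a.
  by case: ifP => _; rewrite ?mul1r ?mul0r.
have swap (F : A -> PT -> R) :
    \sum_(e : A) \sum_(P : PT | e \in val P) F e P = \sum_(P : PT) \sum_(e in val P) F e P.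
  by rewrite (exchange_big_dep xpredT) //=.
have GammaE y : Gamma gamma y = \sum_P g P * y P.
  by apply: eq_bigr => P _; rewrite mulr_suml.
have bnd : forall y : PT -> R, (forall P, 0 <= y P) ->
    (forall e, \sum_P a e P * y P <= u e) -> forall P, y P <= \sum_e u e.
  move=> y y0 yc P; have [e eP] := @path_nonempty _ _ _ _ _ _ P.
  apply: (le_trans _ (le_trans (yc e) _)).
  - rewrite (bigD1 P) //= /a eP mul1r lerDl sumr_ge0 // => Q _.
    by case: ifP => _; rewrite ?mul1r ?mul0r.
  - by rewrite (bigD1 e) //= lerDl sumr_ge0.
have [x0 [[x00 x0c] x0max]] := @lp_attain R PT A a u wt (\sum_e u e)
    (sumr_ge0 _ (fun e _ => hu e)) hu
    bnd.
pose x (P : PT) := if lam * g P <= 1 then x0 P else 0.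
have x0' P : 0 <= x P by rewrite /x; case: ifP.
have xle P : x P <= x0 P by rewrite /x; case: ifP => // _; exact: x00.
have xfeas : flow_feasible u x.
  split => // e; rewrite AF; apply: le_trans (x0c e); apply: ler_sum => P _.
  by rewrite /a; case: ifP => _; rewrite ?mul1r ?mul0r.
pose W (y : PT -> R) := \sum_P wt P * y P.
have Wx : W x = W x0.
  apply: eq_bigr => P _; rewrite /x; case: ifP => // /negbT; rewrite -ltNge => h.
  by rewrite /wt max_l ?mul0r ?mulr0 // subr_le0 ltW.
have WxE : W x = \sum_P x P - lam * \sum_P g P * x P.
  rewrite mulr_sumr -sumrB; apply: eq_bigr => P _; rewrite /wt /x; case: ifP => h.
    by rewrite max_r ?subr_ge0 //; ring.
  by rewrite !mulr0 subr0.
pose used e := [exists P : PT, (e \in val P) && (0 < x P)].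
pose c e := if used e then BF / Gamma gamma x else 0.
have Gam0 : 0 <= Gamma gamma x by rewrite GammaE sumr_ge0 // => P _; rewrite mulr_ge0.
have c0 e : 0 <= c e by rewrite /c; case: ifP => _ //; rewrite divr_ge0 // ltW.
have notused e : ~~ used e -> arc_flow x e = 0.
  move=> /existsPn H; rewrite /arc_flow big1 // => P eP.
  by have := H P; rewrite eP /= lt_def x0' andbT negbK => /eqP.
have budget : \sum_e gamma e * c e * arc_flow x e <= BF.
  have -> : \sum_e gamma e * c e * arc_flow x e = BF / Gamma gamma x * Gamma gamma x.
    transitivity (BF / Gamma gamma x * \sum_e gamma e * arc_flow x e).
      rewrite mulr_sumr; apply: eq_bigr => e _; rewrite /c; case: ifP => h; first ring.
      by rewrite notused ?h // !mulr0.
    by congr (_ * _); rewrite /Gamma -swap; apply: eq_bigr => e _; rewrite /arc_flow mulr_sumr.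
  have [->|G0] := eqVneq (Gamma gamma x) 0; first by rewrite mulr0 ltW.
  by rewrite divfK.
exists x, c; split; last first.
  move=> e ge; split.
  - move=> [P [eP hx]]; rewrite /c (_ : used e = true) //.
    by apply/existsP; exists P; rewrite eP hx.
  - move=> nex; rewrite /c; case: ifP => // /existsP [P /andP [eP hx]].
    by exfalso; apply: nex; exists P.
split.
  by split; [exact: xfeas | split; [move=> e _; exact: c0 | exact: budget]].
move=> x' c' [[x'0 x'c] [c'0 bud']] r Hr z [z0 [zg zc]].
pose z' e P := lam * gamma e * x' P.
have H1 : r <= val_xz x' z'.
  apply: Hr; split; [|split].
  - by move=> e P; rewrite /z' /=; apply: mulr_ge0; [apply: mulr_ge0|].
  - by move=> e P ge; rewrite /z' ge mulr0 mul0r.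
  - apply: (@le_trans _ _ (lam * (\sum_e gamma e * c' e * arc_flow x' e))).
      rewrite mulr_sumr le_eqVlt; apply/orP; left; apply/eqP; apply: eq_bigr => e _.
      by rewrite /arc_flow /z' !mulr_sumr; apply: eq_bigr => P _; ring.
    by apply: le_trans (ler_wpM2l lam0 bud') _; rewrite /lam divfK.
have H2 : val_xz x' z' = W x'.
  apply: eq_bigr => P _; rewrite /z' /wt -max0M //; congr (Num.max 0 _).
  by rewrite -mulr_suml -mulr_sumr /g; ring.
have H3 : W x' <= W x0 by apply: x0max => // e; rewrite -AF; exact: x'c.
pose Z (P : PT) := \sum_(e in val P) z e P.
have S1 : \sum_P (if 0 < x P then Z P else 0) <= lam * \sum_P g P * x P.
  have gx0 P : 0 <= g P * x P by rewrite mulr_ge0.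
  have [G0|Gn0] := eqVneq (\sum_P g P * x P) 0.
    rewrite G0 mulr0 le_eqVlt; apply/orP; left; apply/eqP; apply: big1 => P _.
    case: ifP => // hx.
    have gP : g P = 0.
      have := psumr_eq0P (fun Q _ => gx0 Q) G0 (i:=P) isT.
      by move/eqP; rewrite mulf_eq0 (gt_eqF hx) orbF => /eqP.
    apply: big1 => e eP; apply: zg.
    exact: (psumr_eq0P (fun e _ => hgamma e) gP eP).
  have Gp : 0 < \sum_P g P * x P by rewrite lt_def Gn0 sumr_ge0.
  have kp : 0 < BF / \sum_P g P * x P by rewrite divr_gt0.
  rewrite -(ler_pM2l kp); set G := (\sum_P g P * x P) in Gp kp *.
  have -> : BF / G * (lam * G) = BI.
    by rewrite /lam mulrACA mulVf ?gt_eqF // mulr1 mulrC divfK.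
  apply: le_trans zc.
  rewrite mulr_sumr.
  apply: (@le_trans _ _ (\sum_(P : PT) \sum_(e in val P) c e * z e P)).
    apply: ler_sum => P _; case: ifP => hx; last first.
      by rewrite mulr0 sumr_ge0 // => e _; rewrite mulr_ge0.
    rewrite /Z mulr_sumr le_eqVlt; apply/orP; left; apply/eqP; apply: eq_bigr => e eP.
    rewrite /c (_ : used e = true) ?GammaE //.
    by apply/existsP; exists P; rewrite eP hx.
  rewrite -(swap (fun e P => c e * z e P)) le_eqVlt; apply/orP; left; apply/eqP.
  by apply: eq_bigr => e _; rewrite mulr_sumr.
have S2 : \sum_P x P - \sum_P (if 0 < x P then Z P else 0) <= val_xz x z.
  rewrite -sumrB; apply: ler_sum => P _; case: ifP => h.
    by rewrite le_max lexx orbT.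
  have -> : x P = 0.
    by apply/eqP; move: h; rewrite lt_def x0' andbT => /negbFE.
  by rewrite subrr le_max lexx.
have H4 : W x <= val_xz x z by rewrite WxE; lra.
rewrite -Wx in H3; lra.
Qed.
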